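(* Let $(S,+)$ be a commutative semigroup and let $A\subseteq S$ be a set of A.P. rich. Fix $l\in\mathbb{N}$ and put \[ B=\{(a,b)\in S\times S:\ \{a,\,a+b,\,a+2b,\dots,\,a+lb\}\subseteq A\}. \] Then $B$ is a set of A.P. rich in the semigroup $S\times S$ (with coordinatewise addition).
   Context: Semigroups are written additively; for $n\in\mathbb{N}$ and $b\in S$, $nb$ denotes $b+b+\dots+b$ ($n$ summands), and $a+0b$ means $a$. An arithmetic progression of length $k$ in a semigroup $T$ is a set $\{a,\,a+b,\,a+2b,\dots,\,a+kb\}$ with $a,b\in T$ (if $T$ has an identity element, $b$ is required not to be the identity). A subset $A$ of a semigroup $T$ is called a set of A.P. rich if it contains arithmetic progressions of arbitrary length, i.e. for every $k\in\mathbb{N}$ there exist $a,b\in T$ with $a+ib\in A$ for all $0\le i\le k$. $S\times S$ is a semigroup under coordinatewise addition. *)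

(* Defs.v *)
From Stdlib Require Import Arith.

Fixpoint ap {T : Type} (op : T -> T -> T) (a b : T) (i : nat) : T :=
  match i with
  | 0 => a
  | S i' => op (ap op a b i') b
  end.

Definition is_identity {T : Type} (op : T -> T -> T) (e : T) : Prop :=
  forall x, op e x = x /\ op x e = x.

Definition AP_rich {T : Type} (op : T -> T -> T) (A : T -> Prop) : Prop :=
  forall k : nat, exists a b : T,
    (forall e, is_identity op e -> b <> e) /\
    (forall i, i <= k -> A (ap op a b i)).

Definition prod_op {T : Type} (op : T -> T -> T) (x y : T * T) : T * T :=
  (op (fst x) (fst y), op (snd x) (snd y)).

(* Main.v *)
Require Import Defs.
From Stdlib Require Import Arith Lia.

Lemma ap_add {T} (op : T -> T -> T) x b m n :
  ap op x b (m + n) = ap op (ap op x b m) b n.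
Proof. induction n; simpl. now rewrite Nat.add_0_r. now rewrite Nat.add_succ_r; simpl; rewrite IHn. Qed.

Lemma ap_bb {T} (op : T -> T -> T)
  (op_assoc : forall x y z, op x (op y z) = op (op x y) z) z b j :
  op z (ap op b b j) = ap op z b (S j).
Proof. induction j; simpl. reflexivity. now rewrite op_assoc, IHj. Qed.

Lemma ap_prod {T} (op : T -> T -> T) x y j :
  ap (prod_op op) x y j = (ap op (fst x) (fst y) j, ap op (snd x) (snd y) j).
Proof. induction j; simpl. now destruct x. rewrite IHj. reflexivity. Qed.

Lemma arith1 j i0 : j + i0 * Nat.succ j + Nat.succ j = j + Datatypes.S i0 * Nat.succ j.
Proof. rewrite Nat.mul_succ_l. lia. Qed.
Lemma arith2 j k i l : j <= k -> i <= l -> j + i * Nat.succ j <= k + l * Nat.succ k.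
Proof. intros. apply Nat.add_le_mono; [assumption|]. apply Nat.mul_le_mono; [assumption|]. apply le_n_S; assumption. Qed.

Theorem theorem2 (S : Type) (op : S -> S -> S)
  (op_assoc : forall x y z, op x (op y z) = op (op x y) z)
  (op_comm : forall x y, op x y = op y x)
  (A : S -> Prop) (hA : AP_rich op A) (l : nat) :
  AP_rich (prod_op op)
    (fun p : S * S => forall i, i <= l -> A (ap op (fst p) (snd p) i)).
Proof.
  intros k. destruct (hA (k + l * (Nat.succ k))) as [a [b [Hb HA]]].
  exists (a, b), (b, b). split.
  - intros [e1 e2] He Heq. injection Heq as <- <-.
    apply (Hb b); [|reflexivity]. intros x.
    destruct (He (x, x)) as [H1 H2]. unfold prod_op in H1, H2; simpl in *.
    injection H1 as H1 _. injection H2 as H2 _. auto.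
  - intros j Hj. rewrite ap_prod. simpl. intros i Hi.
    assert (E : forall i, ap op (ap op a b j) (ap op b b j) i = ap op a b (j + i * Nat.succ j)).
    { induction i0. simpl. now rewrite Nat.add_0_r.
      change (ap op (ap op a b j) (ap op b b j) (Datatypes.S i0)) with
        (op (ap op (ap op a b j) (ap op b b j) i0) (ap op b b j)).
      rewrite IHi0, ap_bb by exact op_assoc.
      assert (Hn : j + Nat.succ i0 * Nat.succ j = (j + i0 * Nat.succ j) + Nat.succ j)
        by (rewrite Nat.mul_succ_l; lia).
      rewrite <- ap_add. f_equal. apply arith1. }
    rewrite E. apply HA. now apply arith2.
Qed.
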